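(* Let $S$ be a memory system satisfying the Causality and Data Independence assumptions. For all $n,m\ge1$: every trace of $S(n,m)$ is sequentially consistent if and only if there is a witness $\Omega$ for $S(n,m)$ such that the graph $G(\Omega)(\tau)$ is acyclic for every unambiguous trace $\tau$ of $S(n,m)$.
   Context: Notation: $\mathbb{N}_n=\{1,\dots,n\}$, $\mathbb{W}_n=\{0,\dots,n\}$, $\mathbb{W}=\{0,1,2,\dots\}$. Memory events $E(n,m,v)=\{R,W\}\times\mathbb{N}_n\times\mathbb{N}_m\times\mathbb{W}_v$; for $e=\langle a,b,c,d\rangle$, $op(e)=a$, $proc(e)=b$, $loc(e)=c$, $data(e)=d$; $0$ models the initial value of every location. A memory system is a family $S=(S(n,m,v))_{n,m,v\ge1}$, $S(n,m,v)$ a regular set of finite runs over an alphabet $E^a(n,m,v)\supseteq E(n,m,v)$ (other letters are internal events); $S(n,m)=\bigcup_{v\ge1}S(n,m,v)$. The trace of a run is its subsequence of memory events; traces of $S(n,m,v)$ (resp. $S(n,m)$) are traces of its runs. For a sequence $\tau$ of memory events with positions $1,\dots,|\tau|$: $P(\tau,i)=\{k: proc(\tau(k))=i\}$, $L(\tau,j)=\{k: loc(\tau(k))=j\}$, $L^w(\tau,j)=\{k\in L(\tau,j): op(\tau(k))=W\}$, $L^r(\tau,j)=\{k\in L(\tau,j): op(\tau(k))=R\}$. A trace $\tau$ is unambiguous if for every location $j$ and $x\in L^w(\tau,j)$, $data(\tau(x))\ne0$ and $data(\tau(x))\ne data(\tau(y))$ for all $y\in L^w(\tau,j)\setminus\{x\}$.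 Causality assumption: for all $n,m,v\ge1$, every trace $\tau$ of $S(n,m,v)$, every location $j$ and every $x\in L^r(\tau,j)$, either $data(\tau(x))=0$ or there is $y\in L^w(\tau,j)$ with $data(\tau(x))=data(\tau(y))$. Data Independence assumption: a renaming function is $\lambda:\mathbb{N}_m\times\mathbb{W}\to\mathbb{W}$ with $\lambda(j,0)=0$ for all $j$, inducing $\lambda^d(\langle a,b,c,d\rangle)=\langle a,b,c,\lambda(c,d)\rangle$ letterwise on sequences; for all $n,m,v\ge1$ and $\tau\in E(n,m,v)^*$, $\tau$ is a trace of $S(n,m,v)$ iff there are an unambiguous trace $\tau'$ of $S(n,m)$ and a renaming function $\lambda:\mathbb{N}_m\times\mathbb{W}\to\mathbb{W}_v$ with $\tau=\lambda^d(\tau')$. Sequential consistency: $\tau$ is serial if for every position $u$, with $upto(\tau,u)=\{k\le u: op(\tau(k))=W,\ loc(\tau(k))=loc(\tau(u))\}$, $data(\tau(u))=0$ when $upto(\tau,u)=\emptyset$ and $data(\tau(u))=data(\tau(\max upto(\tau,u)))$ otherwise. $M(\tau,i)=\{\langle u,v\rangle: u,v\in P(\tau,i), u<v\}$. $\tau$ is sequentially consistent if some permutation $f$ of $\mathbb{N}_{|\tau|}$ satisfies (C1) $\langle u,v\rangle\in M(\tau,i)$ for some $i$ implies $f(u)<f(v)$, and (C2) $\tau_{f^{-1}(1)}\cdots\tau_{f^{-1}(|\tau|)}$ is serial. A witness $\Omega$ for $S(n,m)$ assigns to every trace $\tau$ of $S(n,m)$ and location $j$ a strict total order $\Omega(\tau,j)$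 on $L^w(\tau,j)$. For unambiguous $\tau$, $\Omega^e(\tau,j)\subseteq L(\tau,j)^2$: $\langle x,y\rangle\in\Omega^e(\tau,j)$ iff (1) $data(\tau(x))=data(\tau(y))$, $op(\tau(x))=W$, $op(\tau(y))=R$; or (2) $data(\tau(x))=0$ and $data(\tau(y))\ne0$; or (3) there are $a,b\in L^w(\tau,j)$ with $\langle a,b\rangle\in\Omega(\tau,j)$, $data(\tau(a))=data(\tau(x))$, $data(\tau(b))=data(\tau(y))$. The constraint graph $G(\Omega)(\tau)$ is the directed graph with vertex set $\{1,\dots,|\tau|\}$ and edge set $\bigcup_{1\le i\le n}M(\tau,i)\cup\bigcup_{1\le j\le m}\Omega^e(\tau,j)$. *)

(* Defs.v *)
From mathcomp Require Import all_boot all_fingroup.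
From Stdlib Require List.
Set Implicit Arguments. Unset Strict Implicit. Unset Printing Implicit Defensive.

Inductive opkind := OpR | OpW.

Record event := Ev { op : opkind; proc : nat; loc : nat; data : nat }.

Definition ev0 : event := Ev OpR 0 0 0.

Definition inE (n m v : nat) (e : event) : Prop :=
  1 <= proc e <= n /\ 1 <= loc e <= m /\ data e <= v.

Inductive letter (I : Type) := Mem of event | Int of I.
Arguments Mem {I} _.
Arguments Int {I} _.

Definition trace_of_run (I : Type) (r : seq (letter I)) : seq event :=
  pmap (fun l => match l with Mem e => Some e | Int _ => None end) r.

(** Regular language over the finite alphabet E^a = E(n,m,v) ∪ A
    (A a finite list of internal events), accepted by a DFA. *)
Definition regular_over (I : Type) (n m v : nat) (L : seq (letter I) -> Prop) : Prop :=
  exists (A : seq I) (Q : finType) (q0 : Q) (delta : Q -> letter I -> Q) (F : pred Q),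
    forall w : seq (letter I),
      L w <->
      ((forall l, List.In l w ->
          match l with Mem e => inE n m v e | Int a => List.In a A end)
       /\ F (foldl delta q0 w)).

Definition memory_system (I : Type) (S : nat -> nat -> nat -> seq (letter I) -> Prop) : Prop :=
  forall n m v, 1 <= n -> 1 <= m -> 1 <= v -> regular_over n m v (S n m v).

Definition trace_nmv (I : Type) (S : nat -> nat -> nat -> seq (letter I) -> Prop)
  (n m v : nat) (tau : seq event) : Prop :=
  exists r, S n m v r /\ tau = trace_of_run r.

Definition trace_nm (I : Type) (S : nat -> nat -> nat -> seq (letter I) -> Prop)
  (n m : nat) (tau : seq event) : Prop :=
  exists v, 1 <= v /\ trace_nmv S n m v tau.

(** Positions are 0-based: 0 .. size tau - 1. *)
Notation at_ tau k := (nth ev0 tau k).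

Definition inP (tau : seq event) (i x : nat) : Prop :=
  x < size tau /\ proc (at_ tau x) = i.
Definition inL (tau : seq event) (j x : nat) : Prop :=
  x < size tau /\ loc (at_ tau x) = j.
Definition inLw (tau : seq event) (j x : nat) : Prop :=
  inL tau j x /\ op (at_ tau x) = OpW.
Definition inLr (tau : seq event) (j x : nat) : Prop :=
  inL tau j x /\ op (at_ tau x) = OpR.

Definition unambiguous (tau : seq event) : Prop :=
  forall j x, inLw tau j x ->
    data (at_ tau x) <> 0 /\
    (forall y, inLw tau j y -> y <> x -> data (at_ tau x) <> data (at_ tau y)).

Definition causality (I : Type) (S : nat -> nat -> nat -> seq (letter I) -> Prop) : Prop :=
  forall n m v, 1 <= n -> 1 <= m -> 1 <= v ->
  forall tau, trace_nmv S n m v tau ->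
  forall j x, inLr tau j x ->
    data (at_ tau x) = 0 \/
    exists y, inLw tau j y /\ data (at_ tau x) = data (at_ tau y).

(** Renaming functions N_m x W -> W_v (given as total functions nat -> nat -> nat;
    only values on locations 1..m matter). *)
Definition renaming (v : nat) (lam : nat -> nat -> nat) : Prop :=
  (forall j, lam j 0 = 0) /\ (forall j d, lam j d <= v).

Definition rename_ev (lam : nat -> nat -> nat) (e : event) : event :=
  Ev (op e) (proc e) (loc e) (lam (loc e) (data e)).

Definition data_independence (I : Type) (S : nat -> nat -> nat -> seq (letter I) -> Prop) : Prop :=
  forall n m v, 1 <= n -> 1 <= m -> 1 <= v ->
  forall tau : seq event, (forall e, List.In e tau -> inE n m v e) ->
    (trace_nmv S n m v tau <->
     exists (tau' : seq event) (lam : nat -> nat -> nat),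
       trace_nm S n m tau' /\ unambiguous tau' /\ renaming v lam /\
       tau = map (rename_ev lam) tau').

Definition serial (tau : seq event) : Prop :=
  forall u, u < size tau ->
    ((forall k, k <= u -> ~ inLw tau (loc (at_ tau u)) k) /\ data (at_ tau u) = 0)
    \/
    (exists k, k <= u /\ inLw tau (loc (at_ tau u)) k /\
       (forall k', k < k' <= u -> ~ inLw tau (loc (at_ tau u)) k') /\
       data (at_ tau u) = data (at_ tau k)).

Definition seq_consistent (tau : seq event) : Prop :=
  exists f : {perm 'I_(size tau)},
    (forall u w : 'I_(size tau), u < w ->
        proc (at_ tau u) = proc (at_ tau w) -> f u < f w) /\
    serial [seq at_ tau ((f^-1)%g k) | k : 'I_(size tau)].

Definition strict_total_order_on (A : nat -> Prop) (R : nat -> nat -> Prop) : Prop :=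
  (forall x y, R x y -> A x /\ A y) /\
  (forall x, ~ R x x) /\
  (forall x y z, R x y -> R y z -> R x z) /\
  (forall x y, A x -> A y -> x <> y -> R x y \/ R y x).

Definition witness (I : Type) (S : nat -> nat -> nat -> seq (letter I) -> Prop)
  (n m : nat) (Omega : seq event -> nat -> nat -> nat -> Prop) : Prop :=
  forall tau, trace_nm S n m tau ->
  forall j, 1 <= j <= m -> strict_total_order_on (inLw tau j) (Omega tau j).

Definition Omega_e (Omega : seq event -> nat -> nat -> nat -> Prop)
  (tau : seq event) (j x y : nat) : Prop :=
  inL tau j x /\ inL tau j y /\
  ( (data (at_ tau x) = data (at_ tau y) /\ op (at_ tau x) = OpW /\ op (at_ tau y) = OpR)
  \/ (data (at_ tau x) = 0 /\ data (at_ tau y) <> 0)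
  \/ (exists a b, inLw tau j a /\ inLw tau j b /\ Omega tau j a b /\
        data (at_ tau a) = data (at_ tau x) /\ data (at_ tau b) = data (at_ tau y)) ).

Definition G_edge (n m : nat) (Omega : seq event -> nat -> nat -> nat -> Prop)
  (tau : seq event) (x y : nat) : Prop :=
  (exists i, 1 <= i <= n /\ inP tau i x /\ inP tau i y /\ x < y)
  \/ (exists j, 1 <= j <= m /\ Omega_e Omega tau j x y).

Definition acyclic (E : nat -> nat -> Prop) : Prop :=
  ~ exists (k : nat) (p : nat -> nat),
      0 < k /\ p 0 = p k /\ (forall i, i < k -> E (p i) (p i.+1)).

(* Main.v *)
Require Import Defs.
From mathcomp Require Import all_boot all_fingroup.
From mathcomp Require Import zify.
From Stdlib Require ClassicalEpsilon.
Set Implicit Arguments. Unset Strict Implicit. Unset Printing Implicit Defensive.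

Definition pb (P : Prop) : bool :=
  if ClassicalEpsilon.excluded_middle_informative P then true else false.
Lemma pbP (P : Prop) : pb P <-> P.
Proof. rewrite /pb; case: ClassicalEpsilon.excluded_middle_informative => //. Qed.

Inductive reach (E : nat -> nat -> Prop) : nat -> nat -> Prop :=
| r1 x y : E x y -> reach E x y
| rS x y z : E x y -> reach E y z -> reach E x z.

Lemma reach_trans E x y z : reach E x y -> reach E y z -> reach E x z.
Proof. elim=> [a b H|a b c H _ IH] Hz; [exact: rS H Hz | exact: rS H (IH Hz)]. Qed.

Lemma reach_walk E x z : reach E x z ->
  exists k p, 0 < k /\ p 0 = x /\ p k = z /\ (forall i, i < k -> E (p i) (p i.+1)).
Proof.
elim=> [a b H|a b c H _ [k [p [Hk [H0 [Hk' Hw]]]]]].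
  exists 1, (fun i => if i is 0 then a else b); split=> //; split=> //; split=> //.
  by case=> // _.
exists k.+1, (fun i => if i is i'.+1 then p i' else a); split=> //; split=> //; split=> //.
case=> [_|i Hi] /=; first by rewrite H0.
exact: Hw.
Qed.

Lemma acyclic_reach E x : acyclic E -> ~ reach E x x.
Proof. move=> Ha /reach_walk [k [p [Hk [H0 [Hk' Hw]]]]]; apply: Ha.
exists k, p; split=> //; split=> //; by rewrite H0 Hk'. Qed.

Lemma acyclic_of_rank E (r : nat -> nat) :
  (forall x y, E x y -> r x < r y) -> acyclic E.
Proof.
move=> Hr [k [p [Hk [H0 Hw]]]].
have: forall i, 0 < i <= k -> r (p 0) < r (p i).
  elim=> // i IH /andP [_ Hi].
  case: i IH Hi => [_ Hi|i IH Hi]; first exact: Hr (Hw 0 Hi).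
  apply: ltn_trans (IH _) (Hr _ _ (Hw _ Hi)). lia.
by move/(_ k); rewrite Hk leqnn -H0 ltnn => /(_ isT).
Qed.

Lemma count_sub_in T (a1 a2 : pred T) s :
  (forall z, List.In z s -> a1 z -> a2 z) -> count a1 s <= count a2 s.
Proof.
elim: s => //= y s IH Hy.
have Hs : forall z, List.In z s -> a1 z -> a2 z by move=> w Hw; apply: Hy; right.
have := Hy y (or_introl erefl); have := IH Hs.
case: (a1 y); case: (a2 y) => //= H1 H2; try lia.
Qed.

Lemma count_strict T (a1 a2 : pred T) s :
  (forall z, List.In z s -> a1 z -> a2 z) ->
  (exists z, List.In z s /\ a2 z /\ ~~ a1 z) -> count a1 s < count a2 s.
Proof.
elim: s => [_ [z [[]]]|x s IH] Hs [z [Hz [H2 H1]]] /=.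
have Hs' : forall z, List.In z s -> a1 z -> a2 z by move=> y Hy; apply: Hs; right.
case: Hz => [Ezx|Hz].
  subst z; rewrite H2 (negbTE H1) /= add0n add1n ltnS.
  exact: count_sub_in.
move: (IH Hs' (ex_intro _ z (conj Hz (conj H2 H1)))).
move=> Hc; have := Hs x (or_introl erefl); case: (a1 x).
  by move=> ->; rewrite //= !add1n ltnS.
by move=> _; rewrite add0n; apply: leq_trans Hc _; case: (a2 x).
Qed.

Lemma mem_In (T : eqType) (x : T) s : x \in s -> List.In x s.
Proof.
elim: s => //= y s IH; rewrite in_cons => /orP [/eqP ->|H]; [by left|right; exact: IH].
Qed.

Lemma in_iota0 z N : z < N -> List.In z (iota 0 N).
Proof. by move=> H; apply: mem_In; rewrite mem_iota. Qed.

Lemma topo E N : (forall x y, E x y -> x < N /\ y < N) -> acyclic E ->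
  exists g : nat -> nat, (forall x y, x < N -> y < N -> g x = g y -> x = y) /\
    (forall x y, E x y -> g x < g y).
Proof.
move=> HE Ha.
pose a x := count (fun y => pb (reach E y x)) (iota 0 N).
exists (fun x => a x * N + x); split.
  move=> x y Hx Hy Hxy.
  have : (a x * N + x) %% N = (a y * N + y) %% N by rewrite Hxy.
  by rewrite !modnMDl !modn_small.
move=> x y Hxy.
have Hlt : a x < a y.
  apply: count_strict.
    move=> z _ /pbP Hz; apply/pbP; exact: reach_trans Hz (r1 Hxy).
  exists x; split; first by apply: in_iota0; case: (HE _ _ Hxy).
  split; first by apply/pbP; exact: r1.
  by apply/negP => /pbP; apply: acyclic_reach.
have [Hx Hy] := HE _ _ Hxy.
apply: (@leq_trans ((a x).+1 * N)).
  by rewrite mulSn addnC ltn_add2r.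
apply: leq_trans (leq_addr y _); by rewrite leq_mul2r Hlt orbT.
Qed.

Lemma rank_ok N (g : nat -> nat) : (forall x y, x < N -> y < N -> g x = g y -> x = y) ->
  (forall u, u < N -> count (fun k => g k < g u) (iota 0 N) < N) /\
  (forall a b, a < N -> b < N ->
     (count (fun k => g k < g a) (iota 0 N) < count (fun k => g k < g b) (iota 0 N))
     = (g a < g b)).
Proof.
move=> Hinj.
have Hmono : forall a b, a < N -> b < N -> g a < g b ->
  count (fun k => g k < g a) (iota 0 N) < count (fun k => g k < g b) (iota 0 N).
  move=> a b Ha Hb Hab; apply: count_strict.
    by move=> z _ Hz; apply: ltn_trans Hz Hab.
  by exists a; split; [exact: in_iota0|rewrite Hab ltnn].
split.
  move=> u Hu; rewrite -[X in _ < X](size_iota 0 N) -count_predT.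
  apply: count_strict => //; exists u; split; [exact: in_iota0|by rewrite ltnn].
move=> a b Ha Hb; apply/idP/idP; last exact: Hmono.
move=> H; case: (ltngtP (g a) (g b)) => // H'.
  have := Hmono _ _ Hb Ha H'; move: H; move: (count _ _) (count _ _) => p q H1 H2.
  by have := ltn_trans H1 H2; rewrite ltnn.
have E := Hinj _ _ Ha Hb H'; subst b; by rewrite ltnn in H.
Qed.

Definition serialg (tau : seq event) (g : nat -> nat) : Prop :=
  forall u, u < size tau ->
  ((forall k, inLw tau (loc (at_ tau u)) k -> g k <= g u -> False) /\ data (at_ tau u) = 0)
  \/ (exists k, inLw tau (loc (at_ tau u)) k /\ g k <= g u /\
       (forall k', inLw tau (loc (at_ tau u)) k' -> g k < g k' -> g k' <= g u -> False) /\
       data (at_ tau u) = data (at_ tau k)).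

Definition SCg (tau : seq event) (g : nat -> nat) : Prop :=
  (forall x y, x < size tau -> y < size tau -> g x = g y -> x = y) /\
  (forall u w, u < w -> w < size tau -> proc (at_ tau u) = proc (at_ tau w) -> g u < g w) /\
  serialg tau g.

Lemma SCg_transfer tau g g' :
  (forall a b, a < size tau -> b < size tau -> (g' a < g' b) = (g a < g b)) ->
  SCg tau g -> SCg tau g'.
Proof.
move=> Heq [Hi [Hp Hs]].
have Hle : forall a b, a < size tau -> b < size tau -> (g' a <= g' b) = (g a <= g b).
  by move=> a b Ha Hb; rewrite [LHS]leqNgt [RHS]leqNgt Heq.
split; [|split].
- move=> x y Hx Hy Hxy; apply: Hi => //.
  by apply/eqP; rewrite eqn_leq -!Hle // Hxy leqnn.
- by move=> u w Huw Hw Hpr; rewrite Heq ?(ltn_trans Huw) //; apply: Hp.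
- move=> u Hu; case: (Hs u Hu) => [[H1 H2]|[k [Hk [H1 [H2 H3]]]]].
    left; split=> // k Hk; rewrite Hle //; [exact: H1|by case: Hk => -[]].
  have Hks : k < size tau by case: Hk => -[].
  right; exists k; split=> //; split; first by rewrite Hle.
  split=> // k' Hk'; have Hk's : k' < size tau by case: Hk' => -[].
  rewrite Heq // Hle //; exact: H2.
Qed.

Lemma serial_iff (tau sigma : seq event) (g h : nat -> nat) :
  size sigma = size tau ->
  (forall u, u < size tau -> g u < size tau /\ h (g u) = u) ->
  (forall p, p < size tau -> h p < size tau /\ g (h p) = p) ->
  (forall p, p < size tau -> at_ sigma p = at_ tau (h p)) ->
  serial sigma <-> serialg tau g.
Proof.
move=> Hsz Hg Hh Hat.
have HLw : forall j q, inLw sigma j q -> q < size tau /\ inLw tau j (h q).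
  move=> j q [[Hq Hl] Ho]; rewrite Hsz in Hq; rewrite Hat // in Hl Ho.
  have [Hhq _] := Hh q Hq; by split=> //; split.
have HLw' : forall j k, inLw tau j k -> inLw sigma j (g k).
  move=> j k [[Hk Hl] Ho]; have [Hgk Hhg] := Hg k Hk.
  by split; [split|]; rewrite ?Hsz ?Hat // Hhg.
split.
- move=> Hs u Hu; have [Hgu Hhg] := Hg u Hu.
  have Hp : g u < size sigma by rewrite Hsz.
  have Ea : at_ sigma (g u) = at_ tau u by rewrite Hat // Hhg.
  have := Hs _ Hp; rewrite Ea; case=> [[Hno Hd]|[k0 [Hk0 [Hw [Hb Hd]]]]].
    left; split=> // k Hk Hle; exact: Hno _ Hle (HLw' _ _ Hk).
  have [Hk0s Hk0w] := HLw _ _ Hw.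
  have [_ Egh] := Hh _ Hk0s.
  right; exists (h k0); rewrite Egh; split=> //; split=> //; split.
    move=> k' Hk' H1 H2; apply: Hb (HLw' _ _ Hk'); by rewrite ?H1 ?H2.
  by rewrite Hd Hat.
- move=> Hs p Hp; rewrite Hsz in Hp; have [Hhp Egh] := Hh p Hp.
  have Ea : at_ sigma p = at_ tau (h p) by rewrite Hat.
  rewrite Ea; case: (Hs _ Hhp) => [[Hno Hd]|[k0 [Hk0 [Hle [Hb Hd]]]]].
    left; split=> // k Hk Hw; have [Hks Hw'] := HLw _ _ Hw.
    have [_ E2] := Hh _ Hks.
    by apply: Hno Hw' _; rewrite E2 Egh.
  right; exists (g k0); have [[Hk0s _] _] := Hk0; have [Hgk Hhg] := Hg _ Hk0s.
  split; first by rewrite -Egh.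
  split; first exact: HLw'.
  split; last by rewrite Hd Hat // Hhg.
  move=> k' /andP [H1 H2] Hw; have [Hks Hw'] := HLw _ _ Hw; have [_ E2] := Hh _ Hks.
  by apply: (Hb _ Hw'); rewrite E2 // Egh.
Qed.

Definition gof (N : nat) (F : 'I_N -> 'I_N) (u : nat) : nat :=
  oapp (fun o => nat_of_ord (F o)) 0 (insub u : option 'I_N).

Lemma gofE N (F : 'I_N -> 'I_N) (o : 'I_N) : gof F o = F o.
Proof. by rewrite /gof valK. Qed.

Lemma perm_facts N (f : {perm 'I_N}) :
  (forall u, u < N -> gof f u < N /\ gof (f^-1)%g (gof f u) = u) /\
  (forall p, p < N -> gof (f^-1)%g p < N /\ gof f (gof (f^-1)%g p) = p).
Proof.
split=> u Hu; pose o := Ordinal Hu; have -> : u = o by [].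
  by rewrite !gofE permK.
by rewrite !gofE permKV.
Qed.

Lemma SC_to_SCg tau : seq_consistent tau -> exists g, SCg tau g.
Proof.
move=> [f [HC1 Hser]].
have [Hg Hh] := perm_facts f.
exists (gof f); split; [|split].
- move=> x y Hx Hy.
  have -> : x = Ordinal Hx by []. have -> : y = Ordinal Hy by [].
  rewrite !gofE => /val_inj /perm_inj -> //.
- move=> u w Huw Hw Hp; have Hu := ltn_trans Huw Hw.
  have -> : u = Ordinal Hu by []. have -> : w = Ordinal Hw by [].
  rewrite !gofE; exact: HC1.
- apply/(serial_iff (sigma := [seq at_ tau ((f^-1)%g k) | k : 'I_(size tau)]) (h := gof (f^-1)%g) _ Hg Hh) => //.
    by rewrite size_map size_enum_ord.
  move=> p Hp; rewrite (nth_map (Ordinal Hp)) ?size_enum_ord //.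
  have -> : nth (Ordinal Hp) (enum 'I_(size tau)) p = Ordinal Hp.
    by rewrite -[p in nth _ _ p]/(nat_of_ord (Ordinal Hp)) nth_ord_enum.
  by rewrite -[p in gof _ p]/(nat_of_ord (Ordinal Hp)) gofE.
Qed.

Lemma SCg_to_SC tau g : SCg tau g -> seq_consistent tau.
Proof.
move=> Hsc; have [Hinj _] := Hsc.
have [Hlt Heq] := rank_ok Hinj.
pose g' u := count (fun k => g k < g u) (iota 0 (size tau)).
have Hsc' : SCg tau g' by apply: SCg_transfer Hsc; exact: Heq.
have [Hinj' [HC1 Hser]] := Hsc'.
pose F (o : 'I_(size tau)) : 'I_(size tau) := Ordinal (Hlt o (ltn_ord o)).
have Finj : injective F.
  move=> o1 o2 /(congr1 val) /= E; apply: val_inj; exact: Hinj' E.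
pose f := perm Finj.
have Egof : forall u, u < size tau -> gof f u = g' u.
  move=> u Hu; have -> : u = Ordinal Hu by []. by rewrite gofE permE.
have [Hg Hh] := perm_facts f.
exists f; split.
  move=> u w Huw Hp; rewrite !permE /=; exact: HC1.
apply/(serial_iff (sigma := [seq at_ tau ((f^-1)%g k) | k : 'I_(size tau)]) (h := gof (f^-1)%g) _ Hg Hh) => //.
- by rewrite size_map size_enum_ord.
- move=> p Hp; rewrite (nth_map (Ordinal Hp)) ?size_enum_ord //.
  have -> : nth (Ordinal Hp) (enum 'I_(size tau)) p = Ordinal Hp.
    by rewrite -[p in nth _ _ p]/(nat_of_ord (Ordinal Hp)) nth_ord_enum.
  by rewrite -[p in gof _ p]/(nat_of_ord (Ordinal Hp)) gofE.
- have E : forall a b, a < size tau -> b < size tau -> (gof f a < gof f b) = (g' a < g' b).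
    by move=> a b Ha Hb; rewrite !Egof.
  have := SCg_transfer E Hsc'. by case=> _ [].
Qed.

Lemma at_In (s : seq event) u : u < size s -> List.In (at_ s u) s.
Proof. elim: s u => // e s IH [|u] /= Hu; [by left|right; exact: IH]. Qed.

Lemma trace_run_In (I : Type) (r : seq (letter I)) e :
  List.In e (trace_of_run r) -> List.In (Defs.Mem e) r.
Proof.
elim: r => //= l r IH; rewrite /trace_of_run /=.
case: l => [e'|a] /=; last by move/IH; right.
by case=> [->|/IH]; [left|right].
Qed.

Lemma trace_inE (I : Type) (S : nat -> nat -> nat -> seq (letter I) -> Prop) n m v tau :
  memory_system S -> 1 <= n -> 1 <= m -> 1 <= v -> trace_nmv S n m v tau ->
  forall e, List.In e tau -> Defs.inE n m v e.
Proof.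
move=> Hms Hn Hm Hv [r [Hr ->]] e He.
have [A [Q [q0 [delta [F HL]]]]] := Hms n m v Hn Hm Hv.
have [Hall _] := (proj1 (HL r)) Hr.
exact: (Hall (Defs.Mem e) (trace_run_In He)).
Qed.

Lemma unamb_eq tau j x y : unambiguous tau -> inLw tau j x -> inLw tau j y ->
  data (at_ tau x) = data (at_ tau y) -> x = y.
Proof.
move=> Hun Hx Hy Hd; case: (eqVneq x y) => // Hne.
have Hne' : x <> y by apply/eqP.
by have := (proj2 (Hun j y Hy)) x Hx Hne'; rewrite Hd.
Qed.

Lemma inLw_map lam s j k : inLw (map (rename_ev lam) s) j k <-> inLw s j k.
Proof.
rewrite /inLw /inL size_map; split=> -[[Hk Hl] Ho].
  by rewrite (nth_map ev0) // in Hl Ho.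
by rewrite (nth_map ev0).
Qed.

Lemma SCg_rename lam v s g : renaming v lam -> SCg s g -> SCg (map (rename_ev lam) s) g.
Proof.
move=> [Hl0 _] [Hinj [HC1 Hser]]; rewrite /SCg size_map; split=> //; split.
  move=> u w Huw Hw; rewrite !(nth_map ev0) ?(ltn_trans Huw) //=; exact: HC1.
move=> u Hu; rewrite size_map in Hu; rewrite (nth_map ev0) //=.
case: (Hser u Hu) => [[Hno Hd]|[k [Hk [Hle [Hb Hd]]]]].
  left; split; last by rewrite Hd Hl0.
  by move=> k /inLw_map Hk; apply: Hno.
right; exists k; split; first exact/inLw_map.
split=> //; split; first by move=> k' /inLw_map; apply: Hb.
have [[Hks Hlk] _] := Hk.
by rewrite (nth_map ev0) //= Hd Hlk.
Qed.

Lemma edges_of_SCg n m (Omega : seq event -> nat -> nat -> nat -> Prop) tau g :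
  unambiguous tau -> SCg tau g ->
  (forall j a b, Omega tau j a b -> g a < g b) ->
  forall x y, G_edge n m Omega tau x y -> g x < g y.
Proof.
move=> Hun [Hinj [HC1 Hser]] HO x y.
case=> [[i [_ [[Hx Hpx] [[Hy Hpy] Hxy]]]]|[j [_ [[Hx Hlx] [[Hy Hly] Hc]]]]].
  by apply: HC1 => //; rewrite Hpx Hpy.
case: Hc => [[Hd [Hox Hoy]]|[[Hd0 Hdn]|[a [b [Ha [Hb [Hab [Hda Hdb]]]]]]]].
- have Hxw : inLw tau j x by split.
  have := Hser y Hy; rewrite Hly; case=> [[_ Hd0]|[k [Hk [Hle [_ Hdk]]]]].
    by have := (Hun j x Hxw).1; rewrite Hd Hd0.
  have Exk : x = k by apply: (unamb_eq Hun Hxw Hk); rewrite Hd.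
  subst k; rewrite ltn_neqAle Hle andbT; apply/eqP => E.
  have := Hinj _ _ Hx Hy E => Exy; subst y; by rewrite Hox in Hoy.
- have := Hser x Hx; rewrite Hlx; case=> [[Hno _]|[k [Hk [_ [_ Hdk]]]]]; last first.
    by have := (Hun j k Hk).1; rewrite -Hdk.
  have := Hser y Hy; rewrite Hly; case=> [[_ Hd1]|[k2 [Hk2 [Hle _]]]]; first by [].
  apply: leq_trans Hle; rewrite ltnNge; apply/negP => H; exact: Hno k2 Hk2 H.
- have Hab' := HO _ _ _ Hab.
  have := Hser x Hx; rewrite Hlx; case=> [[_ Hd0]|[k [Hk [Hle [Hbet Hdk]]]]].
    by have := (Hun j a Ha).1; rewrite Hda Hd0.
  have Eak : a = k by apply: (unamb_eq Hun Ha Hk); rewrite Hda.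
  subst k.
  have Hxb : g x < g b by rewrite ltnNge; apply/negP; exact: Hbet b Hb Hab'.
  have := Hser y Hy; rewrite Hly; case=> [[_ Hd0]|[k3 [Hk3 [Hle' [_ Hdk']]]]].
    by have := (Hun j b Hb).1; rewrite Hdb Hd0.
  have Ebk : b = k3 by apply: (unamb_eq Hun Hb Hk3); rewrite Hdb.
  subst k3; exact: leq_trans Hxb Hle'.
Qed.

Lemma SCg_of_acyclic (I : Type) (S : nat -> nat -> nat -> seq (letter I) -> Prop) n m
  (Omega : seq event -> nat -> nat -> nat -> Prop) tau :
  memory_system S -> causality S -> 1 <= n -> 1 <= m ->
  witness S n m Omega -> trace_nm S n m tau -> unambiguous tau ->
  acyclic (G_edge n m Omega tau) -> exists g, SCg tau g.
Proof.
move=> Hms Hca Hn Hm Hw Ht Hun Hac.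
have [v [Hv Htv]] := Ht.
have HiE := trace_inE Hms Hn Hm Hv Htv.
have Hend : forall x y, G_edge n m Omega tau x y -> x < size tau /\ y < size tau.
  move=> x y; case=> [[i [_ [[Hx _] [[Hy _] _]]]]|[j [_ [[Hx _] [[Hy _] _]]]]]; by split.
have [g [Hinj Hg]] := topo Hend Hac.
exists g; split=> //; split.
  move=> u w Huw Hw' Hp; apply: Hg; left.
  have [Hpr _] := HiE _ (at_In (ltn_trans Huw Hw')).
  exists (proc (at_ tau u)); split=> //; split; first by split=> //; exact: ltn_trans Huw Hw'.
  by split.
move=> u Hu; set j := loc (at_ tau u).
have [_ [Hj _]] := HiE _ (at_In Hu).
have HuL : inL tau j u by [].
case: (eqVneq (data (at_ tau u)) 0) => [Hd0|Hdn].
  left; split=> // k Hk Hle.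
  have : g u < g k.
    apply: Hg; right; exists j; split=> //; split=> //; split; first by case: Hk.
    right; left; split=> //; exact: (Hun j k Hk).1.
  by rewrite ltnNge Hle.
case Hop : (op (at_ tau u)).
  have Hr : inLr tau j u by [].
  case: (Hca n m v Hn Hm Hv tau Htv j u Hr) => [Hd0|[y [Hy Hdy]]].
    by rewrite Hd0 in Hdn.
  right; exists y.
  have Hyu : g y < g u.
    apply: Hg; right; exists j; split=> //; split; first by case: Hy.
    split=> //; left; split=> //; split=> //; by case: Hy.
  split=> //; split; first exact: ltnW.
  split=> // k' Hk' H1 H2.
  have [_ [Hirr [_ Htot]]] := Hw tau Ht j Hj.
  have Hne : y <> k' by move=> E; subst k'; rewrite ltnn in H1.
  case: (Htot y k' Hy Hk' Hne) => HO.
    have : g u < g k'.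
      apply: Hg; right; exists j; split=> //; split=> //; split; first by case: Hk'.
      right; right; exists y, k'; split=> //.
    by rewrite ltnNge H2.
  have : g k' < g y.
    apply: Hg; right; exists j; split=> //; split; first by case: Hk'.
    split; first by case: Hy.
    right; right; exists k', y; split=> //.
  by rewrite ltnNge (ltnW H1).
right; exists u; split; first by [].
split=> //; split=> // k' _ H1 H2.
by have := leq_trans H1 H2; rewrite ltnn.
Qed.

Theorem corollary5p4 (I : Type) (S : nat -> nat -> nat -> seq (letter I) -> Prop) :
  memory_system S -> causality S -> data_independence S ->
  forall n m : nat, 1 <= n -> 1 <= m ->
    ((forall tau, trace_nm S n m tau -> seq_consistent tau) <->
     exists Omega : seq event -> nat -> nat -> nat -> Prop,
       witness S n m Omega /\
       forall tau, trace_nm S n m tau -> unambiguous tau ->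
         acyclic (G_edge n m Omega tau)).
Proof.
move=> Hms Hca Hdi n m Hn Hm; split.
- move=> Hsc.
  pose G tau := ClassicalEpsilon.epsilon (inhabits (fun x : nat => x)) (fun g => SCg tau g).
  have HG : forall tau, trace_nm S n m tau -> SCg tau (G tau).
    move=> tau Ht; apply: ClassicalEpsilon.epsilon_spec; exact: SC_to_SCg (Hsc _ Ht).
  exists (fun tau j a b => inLw tau j a /\ inLw tau j b /\ G tau a < G tau b); split.
    move=> tau Ht j _; have [Hinj _] := HG tau Ht.
    split; first by move=> x y [Hx [Hy _]]; split.
    split; first by move=> x [_ [_ H]]; rewrite ltnn in H.
    split; first by move=> x y z [Hx [_ H1]] [_ [Hz H2]]; split; [exact: Hx|split; [exact: Hz|exact: ltn_trans H1 H2]].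
    move=> x y Hx Hy Hne.
    case: (ltngtP (G tau x) (G tau y)) => H.
    + by left.
    + by right.
    + by exfalso; apply: Hne; apply: Hinj H; [case: Hx => -[]|case: Hy => -[]].
  move=> tau Ht Hun; apply: (acyclic_of_rank (r := G tau)).
  apply: edges_of_SCg Hun (HG tau Ht) _.
  by move=> j a b [_ [_ H]].
- move=> [Omega [Hw Hac]] tau Ht.
  have [v [Hv Htv]] := Ht.
  have HiE := trace_inE Hms Hn Hm Hv Htv.
  have [tau' [lam [Ht' [Hun [Hren ->]]]]] := proj1 (Hdi n m v Hn Hm Hv tau HiE) Htv.
  have [g Hg] := SCg_of_acyclic Hms Hca Hn Hm Hw Ht' Hun (Hac _ Ht' Hun).
  exact: SCg_to_SC (SCg_rename Hren Hg).
Qed.
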